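(* Fix $\alpha\in(0,1/2]$ and positive integers $a,n$ with $n\ge \max\{1000(\log(a)+1)/\alpha,\ a+1\}$. Let $A,B$ be disjoint sets with $|A|=a$, $|B|=n$, and let $G$ be the random bipartite graph between $A$ and $B$ in which each of the $an$ pairs is an edge independently with probability $4\alpha/3$. Then with probability at least $1-1/e$ the following property holds: for every nonempty $U\subseteq B$, the number of vertices $y\in A$ with $|U\cap N(y)|>2\alpha|U|$ is at most $24n/(\alpha|U|)$.
   Context: $N(y)$ is the neighbourhood of $y$ in $G$; $\log$ is the natural logarithm. *)

(* Defs.v *)
From HB Require Import structures.
From mathcomp Require Import all_boot all_order all_algebra.
From mathcomp Require Import reals sequences exp.
Set Implicit Arguments. Unset Strict Implicit. Unset Printing Implicit Defensive.
Import Order.TTheory GRing.Theory Num.Theory.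
Local Open Scope ring_scope.

Definition bigraph (a n : nat) := {set ('I_a * 'I_n)}.

Definition nbhd (a n : nat) (E : bigraph a n) (y : 'I_a) : {set 'I_n} :=
  [set x : 'I_n | (y, x) \in E].

(* Probability of the graph E in the random bipartite graph G(a, n, p):
   each of the a*n pairs is an edge independently with probability p. *)
Definition graph_prob (R : realType) (a n : nat) (p : R) (E : bigraph a n) : R :=
  p ^+ #|E| * (1 - p) ^+ (a * n - #|E|).

Definition prob_event (R : realType) (a n : nat) (p : R) (P : pred (bigraph a n)) : R :=
  \sum_(E : bigraph a n | P E) graph_prob p E.

Definition good_property (R : realType) (a n : nat) (alpha : R) (E : bigraph a n) : bool :=
  [forall U : {set 'I_n}, (U != set0) ==>
     (#|[set y : 'I_a | 2 * alpha * #|U|%:R < #|U :&: nbhd E y|%:R]|%:R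
        <= 24 * n%:R / (alpha * #|U|%:R))].

(* Main.v *)
Require Import Defs.
From HB Require Import structures.
From mathcomp Require Import all_boot all_order all_algebra.
From mathcomp Require Import reals sequences exp.
Import Order.TTheory GRing.Theory Num.Theory.
Local Open Scope ring_scope.
From mathcomp Require Import ring lra.

Lemma prodsum (R : comNzRingType) (T : finType) (h : T -> bool -> R) :
  \sum_(E : {set T}) \prod_(e : T) h e (e \in E) = \prod_(e : T) (h e true + h e false).
Proof.
have -> : \prod_(e : T) (h e true + h e false) = \prod_(e:T) \sum_(b : bool) h e b.
  by apply: eq_bigr => e _; rewrite big_bool.
rewrite bigA_distr_bigA /=.
rewrite (reindex (fun f : {ffun T -> bool} => [set x | f x])) /=.
  by apply: eq_bigr => f _; apply: eq_bigr => e _; rewrite inE.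
exists (fun E : {set T} => [ffun x => x \in E]) => f _ /=.
  by apply/ffunP => x; rewrite ffunE inE.
by apply/setP => x; rewrite inE ffunE.
Qed.



Lemma gp_prod (R : realType) a n (p : R) (E : bigraph a n) :
  graph_prob p E = \prod_(e : 'I_a * 'I_n) (if e \in E then p else 1 - p).
Proof.
rewrite /graph_prob (bigID (fun e => e \in E)) /=.
rewrite (eq_bigr (fun=> p)); last by move=> e ->.
rewrite [X in _ = _ * X](eq_bigr (fun=> 1 - p)); last by move=> e /negbTE ->.
rewrite !prodr_const; congr (_ ^+ _ * _ ^+ _).
have := cardC (mem E); rewrite card_prod !card_ord => <-.
rewrite addKn; apply: eq_card => e; by rewrite !inE.
Qed.

Lemma gp_total (R : realType) a n (p : R) :
  \sum_(E : bigraph a n) graph_prob p E = 1.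
Proof.
under eq_bigr do rewrite gp_prod.
rewrite (@prodsum _ _ (fun e b => if b then p else 1 - p)).
by rewrite big1 // => e _; rewrite addrC subrK.
Qed.

Lemma prod_nb (R : realType) a n (l : R) (E : bigraph a n) (Y : {set 'I_a}) (U : {set 'I_n}) :
  \prod_(y in Y) l ^+ #|U :&: nbhd E y| =
  \prod_(e : 'I_a * 'I_n) (if (e \in setX Y U) && (e \in E) then l else 1).
Proof.
rewrite big_mkcond /=.
under eq_bigr => y _.
  have -> : (if y \in Y then l ^+ #|U :&: nbhd E y| else 1) =
     \prod_(x : 'I_n) (if (y \in Y) && (x \in U) && ((y, x) \in E) then l else 1).
    case: (y \in Y) => /=; last by rewrite big1.
    rewrite -prodr_const big_mkcond /=; apply: eq_bigr => x _.
    by rewrite !inE.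
  over.
rewrite (pair_big xpredT xpredT (fun y x => if (y \in Y) && (x \in U) && ((y, x) \in E) then l else 1)) /=.
by apply: eq_bigr => -[y x] _; rewrite in_setX.
Qed.

Lemma mgf (R : realType) a n (p l : R) (Y : {set 'I_a}) (U : {set 'I_n}) :
  \sum_(E : bigraph a n) graph_prob p E * \prod_(y in Y) l ^+ #|U :&: nbhd E y|
   = (1 + p * (l - 1)) ^+ (#|Y| * #|U|).
Proof.
under eq_bigr => E _.
  rewrite prod_nb gp_prod -big_split /=.
  have -> : \prod_(e : 'I_a * 'I_n)
     ((if e \in E then p else 1 - p) * (if (e \in setX Y U) && (e \in E) then l else 1))
     = \prod_(e : 'I_a * 'I_n) (if e \in E then p * (if e \in setX Y U then l else 1) else 1 - p).
    by apply: eq_bigr => e _; case: (e \in E); case: (e \in setX Y U); rewrite /= ?mulr1.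
  over.
rewrite (@prodsum _ _ (fun e b => if b then p * (if e \in setX Y U then l else 1) else 1 - p)) (bigID (mem (setX Y U))) /=.
rewrite [X in _ * X]big1; last by move=> e /negbTE ->; ring.
rewrite mulr1 (eq_bigr (fun=> 1 + p * (l - 1))); last first.
  by move=> e ->; ring.
by rewrite prodr_const cardsX.
Qed.

Lemma point (R : realType) (alpha s : R) a n (E : bigraph a n) :
  1/5 <= s -> 0 < alpha -> ~~ good_property alpha E ->
  1 <= \sum_(U : {set 'I_n} | U != set0)
        \sum_(Y : {set 'I_a} | 24 * n%:R / (alpha * #|U|%:R) < #|Y|%:R)
         \prod_(y in Y) (expR s ^+ #|U :&: nbhd E y| * expR (- (2 * alpha * #|U|%:R / 5))).
Proof.
move=> hs ha /forallPn [U]; rewrite negb_imply => /andP [U0]; rewrite -ltNge => hU.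
have fac_ge0 : forall (V : {set 'I_n}) y, 0 <= expR s ^+ #|V :&: nbhd E y| * expR (- (2 * alpha * #|V|%:R / 5)).
  by move=> V y; rewrite mulr_ge0 // ?exprn_ge0 // expR_ge0.
rewrite (bigD1 U) //=.
rewrite -[X in X <= _]addr0; apply: lerD; last first.
  apply: sumr_ge0 => V _; apply: sumr_ge0 => Y _.
  by apply: prodr_ge0 => y _.
rewrite (bigD1 [set y | 2 * alpha * #|U|%:R < #|U :&: nbhd E y|%:R]) //=.
rewrite -[X in X <= _]addr0; apply: lerD; last first.
  apply: sumr_ge0 => Y _.
  by apply: prodr_ge0 => y _.
apply: (big_ind (fun x => 1 <= x)) => //; first by move=> x y; apply: mulr_ege1.
move=> y; rewrite inE => hy.
rewrite -expRM_natl -expRD -[X in X <= _]expR0 ler_expR.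
have c0 : 0 <= (#|U :&: nbhd E y|%:R : R) by [].
have h : 0 <= (#|U :&: nbhd E y|%:R : R) * (s - 1/5) by rewrite mulr_ge0 // subr_ge0.
lra.
Qed.

Lemma sum_sets (R : realType) (T : finType) (c : R) :
  \sum_(E : {set T}) c = c * 2 ^+ #|T|.
Proof.
have H : \sum_(E : {set T}) (1:R) = 2 ^+ #|T|.
  transitivity (\sum_(E : {set T}) \prod_(e:T) (fun _ _ => (1:R)) e (e \in E)).
    by apply: eq_bigr => E _; rewrite big1.
  by rewrite (@prodsum _ _ (fun _ _ => (1:R))) prodr_const.
by rewrite sumr_const -H sumr_const mulr_natr.
Qed.

Lemma sum_cond_le (R : realType) (I : finType) (P : pred I) (f : I -> R) :
  (forall i, 0 <= f i) -> \sum_(i | P i) f i <= \sum_i f i.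
Proof.
move=> f0; rewrite [X in _ <= X](bigID P) /= lerDl.
by apply: sumr_ge0.
Qed.

Lemma exp32 (R : realType) : (4 : R) <= expR (3/2).
Proof.
have e8 : 9/8 <= expR (1/8 : R) by have := expR_ge1Dx (1/8 : R); lra.
have e4 : 81/64 <= expR (1/4 : R).
  have -> : (1/4 : R) = 1/8 + 1/8 by lra.
  rewrite expRD; nra.
have e2 : 16/10 <= expR (1/2 : R).
  have -> : (1/2 : R) = 1/4 + 1/4 by lra.
  rewrite expRD; nra.
have -> : (3/2 : R) = 1/2 + 1/2 + 1/2 by lra.
rewrite !expRD; nra.
Qed.

Lemma perUY (R : realType) (alpha : R) a n (Y : {set 'I_a}) (U : {set 'I_n}) :
  0 < alpha -> U != set0 -> 24 * n%:R / (alpha * #|U|%:R) < #|Y|%:R ->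
  \sum_(E : bigraph a n) graph_prob (4 * alpha / 3) E *
     \prod_(y in Y) (expR (ln (5/4)) ^+ #|U :&: nbhd E y| * expR (- (2 * alpha * #|U|%:R / 5)))
  <= expR (- (8 * n%:R / 5)).
Proof.
move=> ha U0 hY.
have u0 : 0 < (#|U|%:R : R) by rewrite ltr0n card_gt0.
have hY' : 24 * n%:R < #|Y|%:R * (alpha * #|U|%:R).
  by rewrite -ltr_pdivrMr // mulr_gt0.
under eq_bigr do rewrite big_split /= prodr_const mulrA.
rewrite -big_distrl /= mgf lnK; last by rewrite posrE; lra.
have -> : 1 + 4 * alpha / 3 * (5 / 4 - 1) = 1 + alpha / 3 by field.
apply: le_trans (_ : expR (alpha/3) ^+ (#|Y| * #|U|) * expR (- (2 * alpha * #|U|%:R / 5)) ^+ #|Y| <= _).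
  rewrite ler_wpM2r ?exprn_ge0 ?expR_ge0 //.
  rewrite lerXn2r // ?nnegrE ?expR_ge0 //; first lra.
  by have := expR_ge1Dx (alpha / 3); lra.
rewrite -!expRM_natl -expRD ler_expR natrM.
have : 0 <= (#|Y|%:R : R) by [].
nra.
Qed.

Theorem mainTheorem9 (R : realType) (alpha : R) (a n : nat) :
  0 < alpha -> alpha <= 1 / 2 ->
  (0 < a)%N -> (0 < n)%N ->
  1000 * (ln (a%:R : R) + 1) / alpha <= n%:R ->
  (a + 1 <= n)%N ->
  1 - (expR (1 : R))^-1 <= prob_event (4 * alpha / 3) (good_property alpha (n:=n) (a:=a)).
Proof.
move=> ha ha2 a0 n0 hln han.
set p := 4 * alpha / 3.
have gp0 : forall E : bigraph a n, 0 <= graph_prob p E.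
  by move=> E; rewrite /graph_prob mulr_ge0 // exprn_ge0 // /p; lra.
have n10 : 10 <= (n%:R : R).
  have la : 0 <= ln (a%:R : R) by apply: ln_ge0; rewrite ler1n.
  have h2 : 0 <= (n%:R : R) * (1/2 - alpha) by rewrite mulr_ge0 // subr_ge0.
  move: hln; rewrite ler_pdivrMr //; nra.
suff H : \sum_(E : bigraph a n | ~~ good_property alpha E) graph_prob p E <= expR (-1).
  have := @gp_total R a n p; rewrite (bigID (good_property alpha (n:=n) (a:=a))) /=.
  rewrite /prob_event -expRN => h.
  by rewrite -[X in X - _ <= _]h -addrA gerDl subr_le0.
set s := ln (5/4 : R).
have hs : 1/5 <= s.
  have h1 : ln (1 + (-1/5)) <= -1/5 :> R by apply: le_ln1Dx; lra.
  have e : (5/4 : R) = (1 + (-1/5))^-1 by field.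
  rewrite /s e lnV; last by rewrite posrE; lra.
  by rewrite lerNr; apply: le_trans h1 _; rewrite mulNr.
pose Q (E : bigraph a n) := \sum_(U : {set 'I_n} | U != set0)
        \sum_(Y : {set 'I_a} | 24 * n%:R / (alpha * #|U|%:R) < #|Y|%:R)
         \prod_(y in Y) (expR s ^+ #|U :&: nbhd E y| * expR (- (2 * alpha * #|U|%:R / 5))).
have Q0 : forall E, 0 <= Q E.
  move=> E; apply: sumr_ge0 => U _; apply: sumr_ge0 => Y _; apply: prodr_ge0 => y _.
  by rewrite mulr_ge0 // ?exprn_ge0 // expR_ge0.
apply: le_trans (_ : _ <= \sum_(E : bigraph a n | ~~ good_property alpha E) graph_prob p E * Q E) _.
  apply: ler_sum => E hE; rewrite -[X in X <= _]mulr1 ler_wpM2l //.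
  exact: point.
apply: le_trans (@sum_cond_le R _ _ _ _) _.
  by move=> E; rewrite mulr_ge0.
apply: le_trans (_ : _ <= \sum_(U : {set 'I_n}) \sum_(Y : {set 'I_a}) expR (- (8 * n%:R / 5))) _.
  rewrite /Q; under eq_bigr do rewrite big_distrr /=.
  rewrite exchange_big /=.
  apply: le_trans (_ : _ <= \sum_(U : {set 'I_n} | U != set0) \sum_(Y : {set 'I_a}) expR (- (8 * n%:R / 5))) _; last first.
    apply: (@sum_cond_le R _ _ _ _) => U.
    by apply: sumr_ge0 => Y _; rewrite expR_ge0.
  apply: ler_sum => U U0.
  under eq_bigr do rewrite big_distrr /=.
  rewrite exchange_big /=.
  apply: le_trans (@sum_cond_le R _ _ _ _); last by move=> Y; rewrite expR_ge0.
  apply: ler_sum => Y hY.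
  exact: perUY.
under eq_bigr do rewrite sum_sets.
rewrite sum_sets !card_ord.
clear Q0 Q hs s gp0.
have h4 : (2 : R) ^+ a * 2 ^+ n <= 4 ^+ n.
  have -> : (4 : R) = 2 * 2 by lra.
  rewrite exprMn ler_wpM2r ?exprn_ge0 //.
  rewrite ler_eXn2l ?ltr1n //.
  by apply: leq_trans _ han; rewrite leq_addr.
apply: le_trans (_ : expR (- (8 * n%:R / 5)) * 4 ^+ n <= _).
  by rewrite -mulrA ler_wpM2l ?expR_ge0.
apply: le_trans (_ : expR (- (8 * n%:R / 5)) * expR (3/2) ^+ n <= _).
  rewrite ler_wpM2l ?expR_ge0 // lerXn2r // ?nnegrE ?expR_ge0 //.
  exact: exp32.
rewrite -expRM_natl -expRD ler_expR; lra.
Qed.
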